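(* Let $F$ be any field, $n\ge1$, and let $h_n\in\mathbb Z[X_1,\dots,X_n]$ be the polynomial defined in the context. Let $f=X^n+a_1X^{n-1}+\cdots+a_n\in F[X]$ be separable and irreducible with cyclic Galois group over $F$. If $h_n(a_1,\dots,a_n)\ne0$ (evaluated in $F$), then $f$ is normal over $F$, i.e., the roots of $f$ form a basis of the splitting field $K$ of $f$ over $F$.
   Context: For $m\ge1$ let $\epsilon_m=e^{2\pi\sqrt{-1}/m}$ and $\Psi_m(X_0,\dots,X_{m-1})=\prod_{i\in(\mathbb Z/m\mathbb Z)^\times}\bigl(\sum_{j\in\mathbb Z/m\mathbb Z}\epsilon_m^{ij}X_j\bigr)$, which lies in $\mathbb Z[X_0,\dots,X_{m-1}]$. Let $S_m$ act on polynomials in $X_0,\dots,X_{m-1}$ by $\sigma(X_j)=X_{\sigma(j)}$, let $\mathrm{Stab}(\Psi_m)$ be the stabilizer of $\Psi_m$, let $\mathcal C_m$ be a system of representatives of the left cosets of $\mathrm{Stab}(\Psi_m)$ in $S_m$, and set $\Phi_m=\prod_{\sigma\in\mathcal C_m}\sigma(\Psi_m)$ (a symmetric polynomial in $\mathbb Z[X_0,\dots,X_{m-1}]$, independent of the choice of $\mathcal C_m$). For $m\mid n$, let $\mathcal P_{n,m}$ be the set of unordered partitions of $\{0,1,\dots,n-1\}$ into $m$ parts $P_0,\dots,P_{m-1}$ each of size $n/m$, and define \[ \Theta_{n,m}(X_0,\dots,X_{n-1})=\prod_{\{P_0,\dots,P_{m-1}\}\in\mathcal P_{n,m}}\Phi_m\Bigl(\sum_{a\in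 P_0}X_a,\dots,\sum_{a\in P_{m-1}}X_a\Bigr). \] $\Theta_{n,m}$ is a symmetric polynomial in $\mathbb Z[X_0,\dots,X_{n-1}]$, so there is a unique $\theta_{n,m}\in\mathbb Z[X_1,\dots,X_n]$ with $\Theta_{n,m}(X_0,\dots,X_{n-1})=\theta_{n,m}(s_1,\dots,s_n)$, where $s_i$ is the $i$-th elementary symmetric polynomial in $X_0,\dots,X_{n-1}$. Finally $h_n=\prod_{m\mid n}\theta_{n,m}$. *)

(* Defs.v *)
From HB Require Import structures.
From mathcomp Require Import all_boot all_order all_algebra all_fingroup.
From mathcomp Require Import all_solvable all_field.
From mathcomp Require Import mpoly.
From Stdlib Require Import ClassicalEpsilon.

Set Implicit Arguments.
Unset Strict Implicit.
Unset Printing Implicit Defensive.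

Import GRing.Theory.
Local Open Scope ring_scope.

(* A primitive m-th root of unity in algC (for m >= 1).  Psi_m does not
   depend on which primitive root is chosen. *)
Definition eps (m : nat) : algC :=
  if m is k.+1 then sval (C_prim_root_exists (ltn0Sn k)) else 1.

(* For i < m, i is a unit
   mod m iff coprime i m (this also covers m = 1, where 0 is a unit). *)
Definition Psi (m : nat) : {mpoly algC[m]} :=
  \prod_(i < m | coprime i m) \sum_(j < m) (eps m ^+ (i * j)) *: 'X_j.

Definition StabPsi (m : nat) : {set 'S_m} :=
  [set s : 'S_m | msym s (Psi m) == Psi m].

(* MathComp's permutation product is (s * t) x = t (s x), i.e. the reverse
   of composition, so the paper's left cosets sigma o Stab are MathComp's
   right cosets Stab :* sigma; msym (repr C) (Psi m) depends only on C. *)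
Definition Phi (m : nat) : {mpoly algC[m]} :=
  \prod_(C in rcosets (StabPsi m) [set: 'S_m]) msym (repr C) (Psi m).

Definition eq_partitions (n m : nat) : {set {set {set 'I_n}}} :=
  [set P : {set {set 'I_n}} | [&& partition P [set: 'I_n], #|P| == m
                                & [forall B in P, #|B| == (n %/ m)%N]]].

(* Theta_{n,m}: for each partition, the blocks are listed in some order
   (enum P) as P_0, ..., P_{m-1}; Phi_m is symmetric so the order is
   irrelevant. *)
Definition Theta (n m : nat) : {mpoly algC[n]} :=
  \prod_(P in eq_partitions n m)
     (Phi m \mPo [tuple \sum_(a in nth set0 (enum P) i) 'X_a | i < m]).

Definition elem_sym (n : nat) : n.-tuple {mpoly algC[n]} :=
  [tuple mesym n algC i.+1 | i < n].

(* theta_{n,m}: the (unique) integer polynomial with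
   Theta_{n,m} = theta_{n,m}(s_1, ..., s_n).  Variable i : 'I_n stands for
   X_{i+1}. *)
Definition theta (n m : nat) : {mpoly int[n]} :=
  epsilon (inhabits 0)
    (fun t : {mpoly int[n]} => map_mpoly intr t \mPo elem_sym n = Theta n m).

Definition h (n : nat) : {mpoly int[n]} :=
  \prod_(m <- divisors n) theta n m.

(* Main.v *)
Require Import Defs.
From HB Require Import structures.
From mathcomp Require Import all_boot all_order all_algebra all_fingroup.
From mathcomp Require Import all_solvable all_field.
From mathcomp Require Import mpoly.
From Stdlib Require Import ClassicalEpsilon.
Set Implicit Arguments.
Unset Strict Implicit.
Unset Printing Implicit Defensive.
Import GRing.Theory.
Local Open Scope ring_scope.
Ltac sg := match goal with |- ?g => idtac g end.
Section Gen.
Lemma mmap_uniq n (R S : comNzRingType) (f : R -> S) (h : 'I_n -> S) (g : {mpoly R[n]} -> S) :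
  g 0 = 0 -> {morph g : x y / x + y} -> g 1 = 1 -> {morph g : x y / x * y} ->
  (forall c, g c%:MP = f c) -> (forall i, g 'X_i = h i) -> forall p, g p = mmap f h p.
Proof.
move=> g0 gD g1 gM gC gX p.
rewrite {1}(mpolyE p) (big_morph g gD g0) /mmap; apply: eq_bigr => m _.
rewrite -mul_mpolyC gM gC mpolyXE_id (big_morph g gM g1) /mmap1; congr (_ * _).
apply: eq_bigr => i _.
elim: (m i) => [|k IH]; first by rewrite !expr0 g1.
by rewrite !exprS gM IH gX.
Qed.

Lemma mmap_comp n k (R S : comNzRingType) (f : {rmorphism R -> S}) (v : 'I_k -> S)
   (p : {mpoly R[n]}) (lq : n.-tuple {mpoly R[k]}) :
  mmap f v (p \mPo lq) = mmap f (fun i => mmap f v (tnth lq i)) p.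
Proof.
apply: (mmap_uniq (g := fun p => mmap f v (p \mPo lq))).
- by rewrite comp_mpoly0 rmorph0.
- by move=> x y; rewrite comp_mpolyD rmorphD.
- by rewrite comp_mpoly1 rmorph1.
- by move=> x y; rewrite rmorphM /= rmorphM.
- by move=> c; rewrite comp_mpolyC mmapC.
- by move=> i; rewrite comp_mpolyXU -tnth_nth.
Qed.

Lemma mmap_map n (R S : comNzRingType) (f : {rmorphism R -> S}) (v : 'I_n -> S) (p : {mpoly R[n]}) :
  (map_mpoly f p).@[v] = mmap f v p.
Proof.
apply: (mmap_uniq (g := fun p => (map_mpoly f p).@[v])).
- by rewrite rmorph0 meval0.
- by move=> x y; rewrite rmorphD mevalD.
- by rewrite rmorph1 meval1.
- by move=> x y; rewrite rmorphM mevalM.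
- by move=> c; rewrite map_mpolyC mevalC.
- by move=> i; rewrite (map_mpolyX f U_(i)) mevalXU.
Qed.
End Gen.
Section Gen2.
Lemma eq_mmap n (R S : nzRingType) (f : R -> S) (h1 h2 : 'I_n -> S) p :
  h1 =1 h2 -> mmap f h1 p = mmap f h2 p.
Proof.
by move=> e; rewrite /mmap; apply: eq_bigr => m _; congr (_ * _); apply: eq_bigr => i _; rewrite e.
Qed.

Lemma map_mpoly_inj n (R S : nzRingType) (f : {rmorphism R -> S}) :
  injective f -> injective (map_mpoly (n := n) f).
Proof.
move=> fi p q e; apply/mpolyP => m; apply: fi.
by rewrite -!mcoeff_map_mpoly e.
Qed.

Lemma rmorph_mmap n (R S T : comNzRingType) (f : {rmorphism R -> S}) (phi : {rmorphism S -> T}) (v : 'I_n -> S) p :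
  phi (mmap f v p) = mmap (phi \o f) (phi \o v) p.
Proof.
apply: (mmap_uniq (g := fun p => phi (mmap f v p))).
- by rewrite !rmorph0.
- by move=> x y; rewrite !rmorphD.
- by rewrite !rmorph1.
- by move=> x y; rewrite !rmorphM.
- by move=> c; rewrite mmapC.
- by move=> i; rewrite (mmapX _ _ U_(i)) mmap1U.
Qed.

Definition isZ k (p : {mpoly algC[k]}) := exists q : {mpoly int[k]}, map_mpoly intr q = p.

Lemma msymX1 n (R : comNzRingType) (s : 'S_n) i : msym s ('X_i : {mpoly R[n]}) = 'X_(s i).
Proof. by rewrite /msym mmapX mmap1U. Qed.

Lemma mmap_mesym n (R S : comNzRingType) (f : {rmorphism R -> S}) (v : 'I_n -> S) k :
  mmap f v (mesym n R k) = (mesym n S k).@[v].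
Proof.
rewrite !mesymE raddf_sum /= raddf_sum /=; apply: eq_bigr => h _.
by rewrite mmapX mevalX.
Qed.
End Gen2.

Section PsiInt.
Variable k : nat.
Local Notation m := k.+1.
Let z : algC := eps m.
Lemma z_prim : m.-primitive_root z.
Proof. by rewrite /z /eps; case: (C_prim_root_exists _). Qed.

Let s : seq algC := [seq z ^+ (nat_of_ord i) | i : 'I_m <- [seq i : 'I_m <- enum 'I_m | coprime i m]].
Let N := size s.
Let cs : N.-tuple algC := in_tuple s.

Lemma Psi_s : Psi m = \prod_(c <- s) \sum_(j < m) (c ^+ j) *: 'X_j.
Proof.
rewrite /Psi -/z /s big_map big_filter big_enum_cond /=.
by apply: eq_bigr => i _; apply: eq_bigr => j _; rewrite exprM.
Qed.

Lemma cyc_s : map_poly (intr : int -> algC) 'Phi_m = \prod_(c <- s) ('X - c%:P).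
Proof.
rewrite (Cintr_Cyclotomic z_prim) /cyclotomic /s big_map big_filter big_enum_cond /=.
by [].
Qed.

Definition ck (i : 'I_N) : int := (-1) ^+ i.+1 * ('Phi_m)`_(N - i.+1).

Lemma ck_ok (i : 'I_N) : (mesym N algC i.+1).@[tnth cs] = intr (ck i).
Proof.
have e : (\prod_(c <- s) ('X - c%:P))`_(N - i.+1) = (-1)^+i.+1 * (mesym N algC i.+1).@[tnth cs].
  exact: (mroots_coeff cs (lift ord0 i)).
rewrite /ck rmorphM /= rmorph_sign -coef_map cyc_s e.
by rewrite signrMK.
Qed.

Definition G : {mpoly {mpoly int[m]}[N]} :=
  \prod_(c < N) \sum_(j < m) ('X_j : {mpoly int[m]}) *: ('X_c ^+ j).

Lemma G_sym : G \is symmetric.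
Proof.
apply/issymP => sg; rewrite /G rmorph_prod /=.
rewrite (reindex_inj (@perm_inj _ sg^-1)) /=.
apply: eq_bigr => c _; rewrite rmorph_sum /=; apply: eq_bigr => j _.
by rewrite msymZ rmorphXn /= msymX1 permKV.
Qed.

Definition ev (p : {mpoly {mpoly int[m]}[N]}) : {mpoly algC[m]} :=
  mmap (map_mpoly (intr : int -> algC)) (fun c => (tnth cs c)%:MP) p.

Lemma ev_G : ev G = Psi m.
Proof.
rewrite Psi_s (big_nth 0) big_mkord /ev /G rmorph_prod /=; apply: eq_bigr => c _.
rewrite rmorph_sum /=; apply: eq_bigr => j _.
rewrite mmapZ rmorphXn /= (mmapX _ _ U_(c)) mmap1U (map_mpolyX _ U_(j)).
by rewrite -rmorphXn mulrC mul_mpolyC (tnth_nth 0).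
Qed.

Lemma Psi_isZ : isZ (Psi m).
Proof.
have [T [TS _]] := sym_fundamental G_sym.
exists (mmap idfun (fun i => (ck i)%:MP) T).
rewrite -ev_G -TS /ev mmap_comp.
rewrite (eq_mmap _ (h2 := fun i => map_mpoly (intr : int -> algC) (ck i)%:MP)); last first.
  move=> i; rewrite tnth_mktuple.
  rewrite mmap_mesym map_mpolyC.
  transitivity ((mesym N algC i.+1).@[tnth cs])%:MP_[m]; last by rewrite ck_ok.
  rewrite /meval (@rmorph_mmap N _ _ _ idfun (@mpolyC m algC)).
  by rewrite (mmap_mesym (mpolyC m (R:=algC) \o idfun)) /meval; apply: eq_mmap.
apply: (mmap_uniq (g := fun T => map_mpoly intr (mmap idfun (fun i => (ck i)%:MP) T))).
- by rewrite !rmorph0.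
- by move=> x y; rewrite !rmorphD.
- by rewrite !rmorph1.
- by move=> x y; rewrite !rmorphM.
- by move=> c; rewrite mmapC.
- by move=> i; rewrite (mmapX _ _ U_(i)) mmap1U.
Qed.
End PsiInt.
Section IsZ.
Local Notation mapC := (map_mpoly (intr : int -> algC)).

Lemma isZ_mul k (p q : {mpoly algC[k]}) : isZ p -> isZ q -> isZ (p * q).
Proof. by move=> [a <-] [b <-]; exists (a * b); rewrite rmorphM. Qed.

Lemma isZ_add k (p q : {mpoly algC[k]}) : isZ p -> isZ q -> isZ (p + q).
Proof. by move=> [a <-] [b <-]; exists (a + b); rewrite rmorphD. Qed.

Lemma isZ_1 k : isZ (1 : {mpoly algC[k]}).
Proof. by exists 1; rewrite rmorph1. Qed.

Lemma isZ_0 k : isZ (0 : {mpoly algC[k]}).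
Proof. by exists 0; rewrite rmorph0. Qed.

Lemma isZ_X k (i : 'I_k) : isZ ('X_i : {mpoly algC[k]}).
Proof. by exists 'X_i; rewrite (map_mpolyX _ U_(i)). Qed.

Lemma isZ_prod k (I : Type) (r : seq I) (P : pred I) (F : I -> {mpoly algC[k]}) :
  (forall i, P i -> isZ (F i)) -> isZ (\prod_(i <- r | P i) F i).
Proof.
move=> H; elim/big_rec: _ => [|i x Pi Hx]; first exact: isZ_1.
by apply: isZ_mul => //; apply: H.
Qed.

Lemma isZ_sum k (I : Type) (r : seq I) (P : pred I) (F : I -> {mpoly algC[k]}) :
  (forall i, P i -> isZ (F i)) -> isZ (\sum_(i <- r | P i) F i).
Proof.
move=> H; elim/big_rec: _ => [|i x Pi Hx]; first exact: isZ_0.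
by apply: isZ_add => //; apply: H.
Qed.

Lemma map_msym k (R S : comNzRingType) (f : {rmorphism R -> S}) (s : 'S_k) (p : {mpoly R[k]}) :
  map_mpoly f (msym s p) = msym s (map_mpoly f p).
Proof.
apply/mpolyP => m; by rewrite mcoeff_map_mpoly !mcoeff_sym mcoeff_map_mpoly.
Qed.

Lemma isZ_msym k (s : 'S_k) (p : {mpoly algC[k]}) : isZ p -> isZ (msym s p).
Proof. by move=> [a <-]; exists (msym s a); rewrite map_msym. Qed.

Lemma isZ_comp k l (p : {mpoly algC[k]}) (t : k.-tuple {mpoly algC[l]}) :
  isZ p -> (forall i, isZ (tnth t i)) -> isZ (p \mPo t).
Proof.
move=> [a <-] /fin_all_exists [qi Hq].
exists (a \mPo [tuple qi i | i < k]).
rewrite map_mpoly_comp; last exact: intr_inj.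
congr (_ \mPo _); apply: eq_from_tnth => i.
by rewrite tnth_map tnth_mktuple Hq.
Qed.
End IsZ.

Section PhiSec.
Variable m : nat.

Lemma one_Stab : (1%g : 'S_m) \in StabPsi m.
Proof. by rewrite inE msym1m. Qed.

Lemma msym_coset (C : {set 'S_m}) y :
  C \in rcosets (StabPsi m) [set: 'S_m] -> y \in C ->
  msym y (Psi m) = msym (repr C) (Psi m).
Proof.
move=> /imsetP [x _ ->] yC; rewrite rcosetE in yC *.
have rC : repr (StabPsi m :* x)%g \in (StabPsi m :* x)%g.
  apply: (mem_repr x); apply/rcosetP; exists 1%g; [exact: one_Stab | by rewrite mul1g].
move: yC rC => /rcosetP [a aS ->] /rcosetP [b bS ->].
rewrite !msymMm; move: aS bS; rewrite !inE => /eqP -> /eqP ->.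
by [].
Qed.

Lemma rcosets_mulr (C : {set 'S_m}) s :
  ((C :* s)%g \in rcosets (StabPsi m) [set: 'S_m]) = (C \in rcosets (StabPsi m) [set: 'S_m]).
Proof.
apply/imsetP/imsetP => [[x _ e]|[x _ ->]]; first rewrite rcosetE in e.
  exists (x * s^-1)%g; rewrite ?inE // rcosetE.
  by rewrite rcosetM -e -rcosetM mulgV rcoset1.
by exists (x * s)%g; rewrite ?inE // !rcosetE rcosetM.
Qed.

Lemma Phi_sym : Phi m \is symmetric.
Proof.
apply/issymP => s; rewrite /Phi rmorph_prod /=.
rewrite [RHS](reindex_inj (h := fun C => (C :* s)%g) (@rcoset_inj _ s)) /=.
apply: eq_big => [C|C CR]; first by rewrite rcosets_mulr.
rewrite -msymMm; apply: msym_coset; first by rewrite rcosets_mulr.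
rewrite mem_rcoset mulgK; move: CR => /imsetP [x _ ->]; rewrite rcosetE.
by apply: (mem_repr x); rewrite mem_rcoset mulgV; exact: one_Stab.
Qed.
End PhiSec.
Lemma eq_mmap2 n (R S : nzRingType) (f1 f2 : R -> S) (h1 h2 : 'I_n -> S) p :
  f1 =1 f2 -> h1 =1 h2 -> mmap f1 h1 p = mmap f2 h2 p.
Proof.
move=> ef eh; rewrite /mmap; apply: eq_bigr => m _; rewrite ef; congr (_ * _).
by apply: eq_bigr => i _; rewrite eh.
Qed.

Lemma msym_comp k l (R : comNzRingType) (s : 'S_l) (p : {mpoly R[k]}) (t : k.-tuple {mpoly R[l]}) :
  msym s (p \mPo t) = p \mPo [tuple msym s (tnth t i) | i < k].
Proof.
rewrite /comp_mpoly (rmorph_mmap (mpolyC l (R:=R)) (msym s)).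
apply: eq_mmap2 => [c|i] /=; last by rewrite tnth_mktuple.
by rewrite /msym mmapC.
Qed.

Lemma perm_comp_sym k l (R : comNzRingType) (p : {mpoly R[k]}) (t1 t2 : k.-tuple {mpoly R[l]}) :
  p \is symmetric -> perm_eq t1 t2 -> p \mPo t1 = p \mPo t2.
Proof.
move=> /issymP ps /tuple_permP [sg e].
have -> : t1 = [tuple tnth t2 (sg i) | i < k] by apply: val_inj.
by rewrite -msym_mPo ps.
Qed.

Lemma Psi_isZ_all m : isZ (Psi m).
Proof.
case: m => [|k]; last exact: Psi_isZ.
by rewrite /Psi big_ord0; exact: isZ_1.
Qed.

Lemma Phi_isZ m : isZ (Phi m).
Proof. by apply: isZ_prod => C _; apply: isZ_msym; exact: Psi_isZ_all. Qed.

Section ThetaSec.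
Variables n m : nat.

Definition blk (P : {set {set 'I_n}}) : m.-tuple {mpoly algC[n]} :=
  [tuple \sum_(a in nth set0 (enum P) i) 'X_a | i < m].

Lemma ThetaE : Theta n m = \prod_(P in eq_partitions n m) (Phi m \mPo blk P).
Proof. by []. Qed.

Lemma Theta_isZ : isZ (Theta n m).
Proof.
apply: isZ_prod => P _; apply: isZ_comp; first exact: Phi_isZ.
by move=> i; rewrite tnth_mktuple; apply: isZ_sum => a _; exact: isZ_X.
Qed.

Definition img (s : 'S_n) (P : {set {set 'I_n}}) : {set {set 'I_n}} := [set [set s x | x in B] | B : {set 'I_n} in P].

Lemma img_inv s P : img s^-1 (img s P) = P.
Proof.
have inner (B : {set 'I_n}) : [set (s^-1)%g x | x in [set s y | y in B]] = B.
  rewrite -imset_comp (@eq_imset _ _ _ id); first exact: imset_id.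
  by move=> x /=; rewrite permK.
rewrite /img -imset_comp (@eq_imset _ _ _ id); first exact: imset_id.
by move=> B /=; exact: inner.
Qed.

Lemma imset_permT (s : 'S_n) : s @: [set: 'I_n] = [set: 'I_n].
Proof.
apply/eqP; rewrite eqEcard subsetT card_imset; last exact: perm_inj.
by rewrite /= leqnn.
Qed.

Lemma img_eqp s P : P \in eq_partitions n m -> img s P \in eq_partitions n m.
Proof.
rewrite !inE => /and3P [pP cP bP]; apply/and3P; split.
- by rewrite /img -(imset_permT s) imset_partition //; exact: perm_inj.
- by rewrite /img card_imset //; apply: imset_inj; exact: perm_inj.
- apply/forallP => B'; apply/implyP => /imsetP [B BP ->].
  by rewrite card_imset; [exact: (implyP (forallP bP B)) | exact: perm_inj].
Qed.

Lemma img_eqpE s P : (img s P \in eq_partitions n m) = (P \in eq_partitions n m).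
Proof.
apply/idP/idP; last exact: img_eqp.
by move/(img_eqp s^-1); rewrite img_inv.
Qed.

Lemma seq_tuple_nth (T : Type) (x0 : T) (U : Type) (F : T -> U) (l : seq T) :
  size l = m -> [seq F (nth x0 l (nat_of_ord i)) | i : 'I_m <- enum 'I_m] = map F l.
Proof.
move=> sl; rewrite -[in RHS](mkseq_nth x0 l) sl /mkseq -map_comp -val_enum_ord -map_comp.
by [].
Qed.

Lemma msym_blk s P : P \in eq_partitions n m ->
  perm_eq [tuple msym s (tnth (blk P) i) | i < m] (blk (img s P)).
Proof.
move=> Pe; have Pe' := img_eqp s Pe.
move: Pe Pe'; rewrite !inE => /and3P [_ /eqP cP _] /and3P [_ /eqP cP' _].
pose F (B : {set 'I_n}) : {mpoly algC[n]} := \sum_(a in B) 'X_a.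
have -> : val [tuple msym s (tnth (blk P) i) | i < m] = map F [seq [set s x | x in B] | B : {set 'I_n} <- enum P].
  rewrite /= -map_comp -(seq_tuple_nth set0 (fun B => F (s @: B))); last by rewrite -cardE.
  apply: eq_map => i /=; rewrite tnth_mktuple rmorph_sum /= /F.
  rewrite big_imset /=; last by move=> x y _ _; exact: perm_inj.
  by apply: eq_bigr => a _; rewrite msymX1.
have -> : val (blk (img s P)) = map F (enum (img s P)).
  by rewrite /= (seq_tuple_nth set0 F) // -cardE.
apply: perm_map; apply: uniq_perm.
- rewrite map_inj_uniq ?enum_uniq //; apply: imset_inj; exact: perm_inj.
- exact: enum_uniq.
- move=> B; rewrite mem_enum; apply/mapP/imsetP => [[B0 B0P ->]|[B0 B0P ->]];
  by exists B0; rewrite ?mem_enum in B0P *.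
Qed.

Lemma Theta_sym : Theta n m \is symmetric.
Proof.
apply/issymP => s; rewrite ThetaE rmorph_prod /=.
rewrite [RHS](reindex_inj (h := img s)); last first.
  by move=> P Q e; rewrite -(img_inv s P) e img_inv.
apply: eq_big => [P|P Pe]; first by rewrite img_eqpE.
rewrite msym_comp; apply: perm_comp_sym; first exact: Phi_sym.
exact: msym_blk.
Qed.
End ThetaSec.

Lemma map_mesym_int n k : map_mpoly (intr : int -> algC) (mesym n int k) = mesym n algC k.
Proof.
by rewrite !mesymE raddf_sum /=; apply: eq_bigr => h _; rewrite map_mpolyX.
Qed.

Lemma theta_exists n m : exists t : {mpoly int[n]},
  map_mpoly intr t \mPo elem_sym n = Theta n m.
Proof.
have [Z eZ] := Theta_isZ n m.
have Zs : Z \is symmetric.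
  apply/issymP => s; apply: (map_mpoly_inj (@intr_inj algC)).
  by rewrite map_msym eZ; apply/issymP; exact: Theta_sym.
have [t [tS _]] := sym_fundamental Zs.
exists t; rewrite -eZ -tS map_mpoly_comp; last exact: intr_inj.
congr (_ \mPo _); apply: eq_from_tnth => i.
by rewrite /elem_sym !tnth_map !tnth_ord_tuple map_mesym_int.
Qed.

Lemma theta_prop n m : map_mpoly intr (theta n m) \mPo elem_sym n = Theta n m.
Proof. rewrite /theta; exact: (epsilon_spec _ _ (theta_exists n m)). Qed.

Lemma theta_Z n m (Z : {mpoly int[n]}) : map_mpoly intr Z = Theta n m ->
  theta n m \mPo [tuple mesym n int i.+1 | i < n] = Z.
Proof.
move=> eZ; apply: (map_mpoly_inj (@intr_inj algC)); rewrite eZ -theta_prop.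
rewrite map_mpoly_comp; last exact: intr_inj.
congr (_ \mPo _); apply: eq_from_tnth => i.
by rewrite /elem_sym tnth_map !tnth_mktuple map_mesym_int.
Qed.
Section Residues.
Variables (n m : nat).
Hypotheses (n_gt0 : (0 < n)%N) (m_gt0 : (0 < m)%N) (mn : (m %| n)%N).

Definition res (j : nat) : {set 'I_n} := [set a : 'I_n | (a %% m == j)%N].
Definition P0 : {set {set 'I_n}} := preim_partition (fun a : 'I_n => (a %% m)%N) [set: 'I_n].

Lemma m_le_n : (m <= n)%N.
Proof. exact: dvdn_leq. Qed.

Lemma P0E : P0 = [set res (val x %% m) | x in [set: 'I_n]].
Proof.
rewrite /P0 /preim_partition /equivalence_partition; apply: eq_imset => x.
by apply/setP => y; rewrite !inE eq_sym.
Qed.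

Lemma j_in_res j (jm : (j < m)%N) : Ordinal (leq_trans jm m_le_n) \in res j.
Proof. by rewrite inE /= modn_small. Qed.

Lemma uniq_res : uniq [seq res j | j <- iota 0 m].
Proof.
rewrite map_inj_in_uniq ?iota_uniq // => i j; rewrite !mem_iota /= !add0n => im jm e.
have := j_in_res im; rewrite e inE /= modn_small //; exact/eqP.
Qed.

Lemma memP0 B : (B \in P0) = (B \in [seq res j | j <- iota 0 m]).
Proof.
rewrite P0E; apply/imsetP/mapP => [[x _ ->]|[j jm ->]].
  by exists (x %% m)%N; rewrite // mem_iota add0n ltn_mod m_gt0.
move: jm; rewrite mem_iota add0n => jm.
by exists (Ordinal (leq_trans jm m_le_n)); rewrite // /= modn_small.
Qed.

Lemma perm_P0 : perm_eq (enum P0) [seq res j | j <- iota 0 m].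
Proof.
apply: uniq_perm; [exact: enum_uniq | exact: uniq_res |].
by move=> B; rewrite mem_enum memP0.
Qed.

Lemma card_P0 : #|P0| = m.
Proof. by rewrite cardE (perm_size perm_P0) size_map size_iota. Qed.

Lemma card_res j : (j < m)%N -> #|res j| = (n %/ m)%N.
Proof.
move=> jm.
have lt t : (t < n %/ m)%N -> (j + t * m < n)%N.
  move=> tq; have := divnK mn => e.
  rewrite -e; apply: (@leq_trans ((t.+1) * m)); first by rewrite mulSn ltn_add2r.
  by rewrite leq_mul2r tq orbT.
pose f (t : 'I_(n %/ m)) : 'I_n := Ordinal (lt t (ltn_ord t)).
have -> : res j = f @: [set: 'I_(n %/ m)].
  apply/setP => a; rewrite inE; apply/eqP/imsetP => [e|[t _ ->]]; last first.
    by rewrite /= addnC modnMDl modn_small.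
  have aq : (a %/ m < n %/ m)%N.
    by rewrite ltn_divLR // divnK // ltn_ord.
  exists (Ordinal aq) => //; apply: val_inj => /=.
  by rewrite {1}(divn_eq a m) e addnC.
rewrite card_imset ?cardsT ?card_ord // => t1 t2 /(congr1 val) /= /eqP.
by rewrite eqn_add2l eqn_mul2r eqn0Ngt m_gt0 /= => /eqP /val_inj.
Qed.

Lemma P0_eqp : P0 \in eq_partitions n m.
Proof.
rewrite inE; apply/and3P; split.
- exact: preim_partitionP.
- by rewrite card_P0.
- apply/forallP => B; apply/implyP; rewrite memP0 => /mapP [j]; rewrite mem_iota add0n => jm ->.
  by rewrite card_res.
Qed.

Definition Ytup : m.-tuple {mpoly algC[n]} := [tuple \sum_(a in res i) 'X_a | i < m].

Lemma blk_P0 : perm_eq (blk m P0) Ytup.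
Proof.
pose F (B : {set 'I_n}) : {mpoly algC[n]} := \sum_(a in B) 'X_a.
have -> : val (blk m P0) = map F (enum P0).
  by rewrite /= (@seq_tuple_nth m _ set0 _ F) // -cardE card_P0.
have -> : val Ytup = map F [seq res j | j <- iota 0 m].
  by rewrite /= -val_enum_ord -!map_comp.
exact: perm_map perm_P0.
Qed.
End Residues.
Lemma Ytup_isZ n m i : isZ (tnth (Ytup n m) i).
Proof. by rewrite tnth_mktuple; apply: isZ_sum => a _; exact: isZ_X. Qed.

Lemma Stab_in m : StabPsi m \in rcosets (StabPsi m) [set: 'S_m].
Proof. by apply/imsetP; exists 1%g; rewrite ?inE // rcosetE rcoset1. Qed.

Lemma repr_Stab m : repr (StabPsi m) = 1%g.
Proof. by rewrite /repr one_Stab. Qed.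

Lemma Theta_factor n m : (0 < n)%N -> (0 < m)%N -> (m %| n)%N ->
  exists2 Q, isZ Q & Theta n m = (Psi m \mPo Ytup n m) * Q.
Proof.
move=> n0 m0 mn.
rewrite ThetaE (bigD1 (P0 n m)) /=; last exact: P0_eqp.
rewrite (perm_comp_sym (Phi_sym m) (blk_P0 n0 m0 mn)).
rewrite {1}/Phi (bigD1 (StabPsi m)) /=; last exact: Stab_in.
rewrite repr_Stab msym1m rmorphM /= -mulrA.
eexists; last reflexivity.
apply: isZ_mul.
  apply: isZ_comp; last exact: Ytup_isZ.
  by apply: isZ_prod => C _; apply: isZ_msym; exact: Psi_isZ_all.
apply: isZ_prod => P _; apply: isZ_comp; first exact: Phi_isZ.
by move=> i; rewrite tnth_mktuple; apply: isZ_sum => a _; exact: isZ_X.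
Qed.
Definition Lam n (z : algC) : {mpoly algC[n]} := \sum_(a < n) (z ^+ a) *: 'X_a.

Lemma eps_prim m : (0 < m)%N -> m.-primitive_root (eps m).
Proof. by case: m => // k _; rewrite /eps; case: (C_prim_root_exists _). Qed.

Lemma PsiY n m : (0 < n)%N -> (0 < m)%N -> (m %| n)%N ->
  Psi m \mPo Ytup n m = \prod_(i < m | coprime i m) Lam n (eps m ^+ i).
Proof.
move=> n0 m0 mn; rewrite /Psi rmorph_prod /=; apply: eq_bigr => i _.
rewrite rmorph_sum /= /Lam.
pose p (a : 'I_n) : 'I_m := Ordinal (ltn_pmod a m0).
rewrite (partition_big p predT) //=; apply: eq_bigr => j _.
rewrite comp_mpolyZ comp_mpolyXU -tnth_nth tnth_mktuple scaler_sumr.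
apply: eq_big => [a|a]; first by rewrite inE.
rewrite inE => /eqP aj; congr (_ *: _).
by rewrite -aj /= mulnC exprM (prim_expr_mod (eps_prim m0)) -exprM mulnC exprM.
Qed.
Lemma prim_uniq (R : nzRingType) (z : R) m1 m2 :
  m1.-primitive_root z -> m2.-primitive_root z -> m1 = m2.
Proof.
move=> p1 p2; apply/eqP; rewrite eqn_dvd.
by rewrite (prim_order_dvd p1) (prim_order_dvd p2) (prim_expr_order p1) (prim_expr_order p2) eqxx.
Qed.

Lemma perm_prim n m (n0 : (0 < n)%N) (mn : (m %| n)%N) :
  perm_eq [seq eps n ^+ (nat_of_ord k) | k : 'I_n <- [seq k : 'I_n <- enum 'I_n | m.-primitive_root (eps n ^+ k)]]
          [seq eps m ^+ (nat_of_ord i) | i : 'I_m <- [seq i : 'I_m <- enum 'I_m | coprime i m]].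
Proof.
have wp := eps_prim n0; have m0 : (0 < m)%N := dvdn_gt0 n0 mn.
have ep := eps_prim m0.
apply: uniq_perm.
- rewrite map_inj_in_uniq; first by apply: filter_uniq; exact: enum_uniq.
  move=> k1 k2 _ _ /eqP.
  by rewrite (eq_prim_root_expr wp) !modn_small // => /eqP /val_inj.
- rewrite map_inj_in_uniq; first by apply: filter_uniq; exact: enum_uniq.
  move=> k1 k2 _ _ /eqP.
  by rewrite (eq_prim_root_expr ep) !modn_small // => /eqP /val_inj.
move=> x; apply/mapP/mapP => [[k]|[i]].
  rewrite mem_filter => /andP [pk _] ->.
  have [i ei] := prim_rootP ep (prim_expr_order pk); rewrite ei in pk *.
  exists i => //; rewrite mem_filter mem_enum andbT.
  by rewrite -(prim_root_exp_coprime i ep).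
rewrite mem_filter => /andP [ci _] ->.
have pz : m.-primitive_root (eps m ^+ i) by rewrite prim_root_exp_coprime.
have [k ek] := prim_rootP wp (expr_dvd (prim_expr_order pz) mn).
by exists k => //; rewrite mem_filter mem_enum andbT -ek.
Qed.

Lemma group_prod n (n0 : (0 < n)%N) :
  \prod_(k < n) Lam n (eps n ^+ k) =
  \prod_(m <- divisors n) \prod_(i < m | coprime i m) Lam n (eps m ^+ i).
Proof.
have wp := eps_prim n0.
have single (k : 'I_n) : \prod_(m <- divisors n | m.-primitive_root (eps n ^+ k)) Lam n (eps n ^+ k)
    = Lam n (eps n ^+ k).
  have wn : (eps n ^+ k) ^+ n = 1 by rewrite -exprM mulnC exprM (prim_expr_order wp) expr1n.
  have [m0 pm0 dm0] := prim_order_exists n0 wn.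
  rewrite big_mkcond (bigD1_seq m0) ?divisors_uniq -?dvdn_divisors //= pm0.
  rewrite big_seq_cond big1 ?mulr1 // => m /andP [_ ne]; case: ifP => // pm.
  by move: ne; rewrite (prim_uniq pm pm0) eqxx.
rewrite (eq_bigr _ (fun k _ => esym (single k))).
under eq_bigr do rewrite big_mkcond.
rewrite exchange_big /=.
rewrite big_seq [RHS]big_seq; apply: eq_bigr => m; rewrite -dvdn_divisors // => mn.
rewrite -big_mkcond /=.
have e1 : \prod_(k < n | m.-primitive_root (eps n ^+ k)) Lam n (eps n ^+ k) =
   \prod_(x <- [seq eps n ^+ (nat_of_ord k) | k : 'I_n <- [seq k : 'I_n <- enum 'I_n | m.-primitive_root (eps n ^+ k)]]) Lam n x.
  by rewrite big_map big_filter big_enum_cond.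
have e2 : \prod_(i < m | coprime i m) Lam n (eps m ^+ i) =
   \prod_(x <- [seq eps m ^+ (nat_of_ord i) | i : 'I_m <- [seq i : 'I_m <- enum 'I_m | coprime i m]]) Lam n x.
  by rewrite big_map big_filter big_enum_cond.
by rewrite e1 e2; apply: perm_big; exact: perm_prim.
Qed.
Section Circ.
Variables (n : nat) (n0 : (0 < n)%N).

Definition idx (i j : 'I_n) : 'I_n := Ordinal (ltn_pmod (j + (n - i)) n0).
Definition Cmat (R : Type) (x : 'I_n -> R) : 'M[R]_n := \matrix_(i, j) x (idx i j).

Lemma idx_add (i a : 'I_n) : idx i (Ordinal (ltn_pmod (a + i) n0)) = a.
Proof.
apply: val_inj => /=; rewrite modnDml -addnA subnKC ?modnDr ?modn_small //.
exact: ltnW.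
Qed.

Lemma add_idx (i j : 'I_n) : Ordinal (ltn_pmod (idx i j + i) n0) = j.
Proof.
apply: val_inj => /=; rewrite modnDml -addnA subnK ?modnDr ?modn_small //.
exact: ltnW.
Qed.

Lemma Vdm_neq0 : \det (\matrix_(i < n, k < n) (eps n ^+ (i * k))) != 0.
Proof.
have wp := eps_prim n0.
have -> : \matrix_(i < n, k < n) (eps n ^+ (i * k)) = Vandermonde n (\row_(k < n) eps n ^+ k).
  by apply/matrixP => i k; rewrite !mxE mulnC exprM.
rewrite det_Vandermonde; apply/prodf_neq0 => i _; apply/prodf_neq0 => j ij.
rewrite !mxE subr_eq0 (eq_prim_root_expr wp) !modn_small //.
by rewrite eq_sym neq_ltn ij.
Qed.

Lemma circ_det : \det (Cmat (fun a => 'X_a : {mpoly algC[n]})) = \prod_(k < n) Lam n (eps n ^+ k).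
Proof.
have wp := eps_prim n0.
pose W : 'M[{mpoly algC[n]}]_n := \matrix_(i, k) (eps n ^+ (i * k))%:MP.
pose lam := \row_(k < n) Lam n (eps n ^+ k).
have e : Cmat (fun a => 'X_a) *m W = W *m diag_mx lam.
  apply/matrixP => i k; rewrite mul_mx_diag !mxE.
  rewrite (reindex (fun a : 'I_n => Ordinal (ltn_pmod (a + i) n0))) /=; last first.
    by exists (idx i) => a _; [exact: idx_add | exact: add_idx].
  rewrite /Lam mulr_sumr; apply: eq_bigr => a _; rewrite !mxE idx_add /=.
  rewrite -mul_mpolyC mulrA mulrC; congr (_ * _); rewrite -rmorphM /=; congr (_%:MP).
  rewrite -(prim_expr_mod wp) modnMml (prim_expr_mod wp) -exprM -exprD; congr (_ ^+ _).
  by rewrite mulnDl addnC [(k * a)%N]mulnC.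
have dW : \det W != 0.
  have -> : W = map_mx (@mpolyC n algC) (\matrix_(i < n, k < n) (eps n ^+ (i * k))).
    by apply/matrixP => i k; rewrite !mxE.
  by rewrite det_map_mx mpolyC_eq0 Vdm_neq0.
have := congr1 determinant e; rewrite !det_mulmx det_diag [X in X = _]mulrC.
move=> /(mulfI dW) ->; apply: eq_bigr => k _; rewrite mxE.
by [].
Qed.
End Circ.
Lemma list_prod_nz (S : idomainType) n (v : 'I_n -> S) (s : seq nat) (F : nat -> {mpoly algC[n]}) :
  (forall m, m \in s -> exists2 P : {mpoly int[n]}, map_mpoly intr P = F m & mmap intr v P != 0) ->
  exists2 P : {mpoly int[n]}, map_mpoly intr P = \prod_(m <- s) F m & mmap intr v P != 0.
Proof.
elim: s => [|a s IH] H.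
  by exists 1; rewrite ?big_nil rmorph1 // oner_neq0.
have [Pa ea na] := H a (mem_head _ _).
have [Ps es ns] : exists2 P : {mpoly int[n]}, map_mpoly intr P = \prod_(m <- s) F m & mmap intr v P != 0.
  by apply: IH => m ms; apply: H; rewrite in_cons ms orbT.
exists (Pa * Ps); first by rewrite rmorphM /= big_cons ea es.
by rewrite rmorphM mulf_neq0.
Qed.

Lemma core (S : idomainType) n (n0 : (0 < n)%N) (v : 'I_n -> S) :
  (forall m, m \in divisors n ->
     mmap intr v (theta n m \mPo [tuple mesym n int i.+1 | i < n]) != 0) ->
  \det (Cmat n0 v) != 0.
Proof.
move=> H.
have [P eP nP] : exists2 P : {mpoly int[n]}, map_mpoly intr P =
     \prod_(m <- divisors n) (Psi m \mPo Ytup n m) & mmap intr v P != 0.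
  apply: list_prod_nz => m mdiv.
  have mn : (m %| n)%N by rewrite dvdn_divisors.
  have m0 : (0 < m)%N := dvdn_gt0 n0 mn.
  have [Q [Qz eQ] eT] := Theta_factor n0 m0 mn.
  have [Pz ePz] : isZ (Psi m \mPo Ytup n m).
    by apply: isZ_comp; [exact: Psi_isZ_all | exact: Ytup_isZ].
  exists Pz => //.
  have := H m mdiv; rewrite (@theta_Z n m (Pz * Qz)); last by rewrite rmorphM /= ePz eQ eT.
  by rewrite rmorphM /= mulf_eq0 negb_or => /andP [].
have eD : \det (Cmat n0 (fun a => 'X_a : {mpoly int[n]})) = P.
  apply: (map_mpoly_inj (@intr_inj algC)); rewrite eP -det_map_mx.
  have -> : map_mx (map_mpoly intr) (Cmat n0 (fun a => 'X_a : {mpoly int[n]})) = Cmat n0 (fun a => 'X_a : {mpoly algC[n]}).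
    by apply/matrixP => i j; rewrite !mxE (map_mpolyX _ U_(idx n0 i j)).
  rewrite circ_det group_prod // big_seq [RHS]big_seq; apply: eq_bigr => m mdiv.
  have mn : (m %| n)%N by rewrite dvdn_divisors.
  by rewrite PsiY // (dvdn_gt0 n0 mn).
move: nP; rewrite -eD -det_map_mx.
have -> : map_mx (mmap intr v) (Cmat n0 (fun a => 'X_a : {mpoly int[n]})) = Cmat n0 v.
  by apply/matrixP => i j; rewrite !mxE (mmapX _ _ U_(idx n0 i j)) mmap1U.
by [].
Qed.
Lemma gal_fix_gen (F : fieldType) (L : splittingFieldType F) (K : {subfield L}) (g : gal_of K) (rs : seq L) :
  <<1%AS & rs>>%VS = K -> {subset rs <= K} -> (forall r, r \in rs -> g r = r) -> g = 1%g.
Proof.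
move=> Krs rsK H.
have sub : (<<1%AS & rs>> <= fixedField [set g])%VS.
  apply/Fadjoin_seqP; split; first exact: sub1v.
  move=> r rr; apply/(fixedFieldP (rsK r rr)) => x; rewrite inE => /eqP ->; exact: H.
apply/eqP/gal_eqP => a aK; rewrite gal_id.
have : a \in fixedField [set g] by apply: (subvP sub); rewrite Krs.
by move/(fixedFieldP aK) => -> //; rewrite inE.
Qed.

Lemma mesym_neg (R : comNzRingType) n j (v : 'I_n -> R) :
  (mesym n R j).@[fun a => - v a] = (-1) ^+ j * (mesym n R j).@[v].
Proof.
rewrite mesymE !raddf_sum /= mulr_sumr; apply eq_bigr => h /eqP hj.
rewrite !mevalX -hj.
under eq_bigr do rewrite exprNn.
rewrite big_split /= prodrXr; congr (_ ^+ _ * _).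
rewrite -sum1_card [RHS]big_mkcond /=; apply: eq_bigr => i _.
by rewrite /mesym1 mnmE; case: (i \in h).
Qed.

Section GaloisSec.
Variables (F : fieldType) (L : splittingFieldType F) (n : nat) (f : {poly F}) (K : {subfield L}).
Hypotheses (n0 : (0 < n)%N) (fmon : f \is monic) (fsz : size f = n.+1)
  (fsep : separable_poly f) (firr : irreducible_poly f).
Variable rs : seq L.
Hypotheses (frs : map_poly (in_alg L) f = \prod_(r <- rs) ('X - r%:P)) (Krs : <<1%AS & rs>>%VS = K).
Variable g : gal_of K.
Hypothesis gen : 'Gal(K / 1%AS)%g = <[g]>%g.

Local Notation fL := (map_poly (in_alg L) f).

Lemma rs_uniq : uniq rs.
Proof. by rewrite -separable_prod_XsubC -frs separable_map. Qed.

Lemma rs_size : size rs = n.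
Proof. by have := size_prod_XsubC rs (fun x => x); rewrite -frs size_map_poly fsz; case. Qed.

Lemma rsK : {subset rs <= K}.
Proof. by move=> r rr; rewrite -Krs seqv_sub_adjoin. Qed.

Lemma rs_root y : (y \in rs) = root fL y.
Proof. by rewrite frs root_prod_XsubC. Qed.

Lemma fL_over1 : fL \is a polyOver 1%AS.
Proof. by apply/polyOver1P; exists f. Qed.

Lemma K_galois : galois 1%AS K.
Proof.
apply/splitting_galoisField; exists fL; split; first exact: fL_over1.
  by rewrite separable_map.
by exists rs; rewrite ?frs ?eqpxx.
Qed.

Lemma minPoly_rs y : y \in rs -> minPoly 1%AS y = fL.
Proof.
move=> yr.
have dv : minPoly 1%AS y %| fL by apply: minPoly_dvdp; [exact: fL_over1 | rewrite -rs_root].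
have [q eq] := polyOver1P (minPolyOver 1%AS y).
have qf : q %| f by rewrite -(dvdp_map (in_alg L)) -eq.
have qs : size q != 1.
  rewrite -(size_map_poly (in_alg L)) -eq; apply/eqP => s1.
  move: (root_minPoly 1%AS y) (monic_minPoly 1%AS y).
  rewrite (size1_polyC (eq_leq s1)) rootC monicE lead_coefC => /eqP ->.
  by rewrite eq_sym oner_eq0.
have := (snd firr) q qs qf; rewrite -(eqp_map (in_alg L)) -eq.
by rewrite eqp_monic ?monic_minPoly ?map_monic // => /eqP.
Qed.

Lemma trans_rs y z : y \in rs -> z \in rs -> exists2 h, h \in 'Gal(K / 1%AS)%g & h y = z.
Proof.
move=> yr zr.
have nKE : normalField 1%AS K by case/and3P: K_galois.
have /(normalField_factors (sub1v K)) H := nKE.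
have [r rsub emin] := H y (rsK yr).
move: zr; rewrite rs_root -(minPoly_rs yr) emin.
rewrite -(big_map (fun x : gal_of K => x y) xpredT (fun b => 'X - b%:P)) root_prod_XsubC.
by case/mapP => x xr ->; exists x => //; apply: (subsetP rsub).
Qed.

Lemma gal_rs h y : h \in 'Gal(K / 1%AS)%g -> y \in rs -> h y \in rs.
Proof.
move=> hG yr; rewrite rs_root.
have hk : kHom 1%AS K h by rewrite -gal_kHom // sub1v.
have r1 : root fL y by rewrite -rs_root.
have := kHom_root hk (polyOverS (subvP (sub1v K)) fL_over1) (rsK yr) r1.
suff -> : map_poly h fL = fL by [].
rewrite -map_poly_comp; apply: eq_map_poly => c /=.
by rewrite rmorph_alg.
Qed.

Lemma stab k y : y \in rs -> (g ^+ k)%g y = y -> (g ^+ k)%g = 1%g.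
Proof.
move=> yr gy; apply: (gal_fix_gen Krs rsK) => z zr.
have [h hG hy] := trans_rs yr zr.
move: hG; rewrite gen => /cycleP [i hi]; rewrite -hy hi.
rewrite -galM; last exact: rsK.
rewrite (commuteX2 i k (commute_refl g)) galM; last exact: rsK.
by rewrite gy.
Qed.

Definition y0 := nth 0 rs 0.
Lemma y0r : y0 \in rs.
Proof. by rewrite /y0 mem_nth // rs_size. Qed.

Definition rho (j : nat) : L := (g ^+ j)%g y0.

Lemma gG j : (g ^+ j)%g \in 'Gal(K / 1%AS)%g.
Proof. by rewrite gen mem_cycle. Qed.

Lemma rho_rs j : rho j \in rs.
Proof. exact: gal_rs (gG j) y0r. Qed.

Lemma rho_add i j : rho (i + j) = (g ^+ j)%g (rho i).
Proof. by rewrite /rho expgD galM //; exact: rsK y0r. Qed.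

Lemma rho_inj_le i j : (i <= j)%N -> (j < #[g]%g)%N -> rho i = rho j -> i = j.
Proof.
move=> ij jd e.
have e2 : (g ^+ (j - i))%g (rho i) = rho i by rewrite -rho_add subnKC // -e.
have := stab (rho_rs i) e2 => /eqP; rewrite -order_dvdn => dv.
case: (posnP (j - i)) => [|pos]; first by move=> /eqP; rewrite subn_eq0 => ji; apply/eqP; rewrite eqn_leq ij ji.
have := dvdn_leq pos dv; rewrite leqNgt => /negP []; apply: leq_ltn_trans jd; exact: leq_subr.
Qed.

Lemma rho_uniq d : (d <= #[g]%g)%N -> uniq [seq rho j | j <- iota 0 d].
Proof.
move=> dd; rewrite map_inj_in_uniq ?iota_uniq // => i j; rewrite !mem_iota !add0n => id jd e.
case: (leqP i j) => ij.
  by apply: rho_inj_le => //; apply: leq_trans dd.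
by symmetry; apply: rho_inj_le => //; [exact: ltnW | apply: leq_trans dd].
Qed.

Lemma rs_sub_rho : {subset rs <= [seq rho j | j <- iota 0 #[g]%g]}.
Proof.
move=> z zr; have [h hG hz] := trans_rs y0r zr.
move: hG; rewrite gen => /cycleP [i hi].
apply/mapP; exists (i %% #[g]%g)%N; first by rewrite mem_iota add0n ltn_mod order_gt0.
by rewrite /rho expg_mod_order -hi hz.
Qed.

Lemma ord_n : #[g]%g = n.
Proof.
apply/eqP; rewrite eqn_leq; apply/andP; split.
  rewrite -rs_size -(size_iota 0 #[g]%g) -(size_map rho).
  by apply: uniq_leq_size; [exact: rho_uniq | move=> z /mapP [j _ ->]; exact: rho_rs].
rewrite -rs_size -(size_iota 0 #[g]%g) -(size_map rho).
by apply: uniq_leq_size; [exact: rs_uniq | exact: rs_sub_rho].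
Qed.

Lemma perm_rs : perm_eq rs [seq rho j | j <- iota 0 n].
Proof.
apply: uniq_perm; first exact: rs_uniq.
  by rewrite -ord_n; exact: rho_uniq.
move=> z; apply/idP/idP; first by rewrite -ord_n; exact: rs_sub_rho.
by case/mapP => j _ ->; exact: rho_rs.
Qed.

Lemma dimK : \dim K = n.
Proof.
have := galois_dim K_galois; rewrite gen -orderE ord_n dimv1 divn1.
by [].
Qed.

Lemma free_rho : \det (Cmat n0 (fun a => - rho a)) != 0 -> free [tuple rho a | a < n].
Proof.
move=> dnz; apply/freeP => k sum0 i.
pose c := \row_(j < n) in_alg L (k j).
suff c0 : c = 0.
  by have := congr1 (fun M : 'rV[L]_n => M 0 i) c0; rewrite !mxE => /eqP; rewrite fmorph_eq0 => /eqP.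
apply/eqP; apply: contraR dnz => cnz; rewrite -det_tr; apply/det0P; exists c => //.
apply/matrixP => o t; rewrite !mxE.
have e : forall j : 'I_n, rho (idx n0 t j) = (g ^+ (n - t))%g (rho j).
  move=> j; rewrite -rho_add /rho /= -(expg_mod_order g (j + (n - t))) ord_n.
  by [].
under eq_bigr do rewrite !mxE e mulrN.
rewrite sumrN; apply/eqP; rewrite oppr_eq0; apply/eqP.
transitivity ((g ^+ (n - t))%g (\sum_(j < n) k j *: [tuple rho a | a < n]`_j)); last first.
  by rewrite sum0 rmorph0.
rewrite rmorph_sum; apply: eq_bigr => j _.
rewrite -tnth_nth tnth_mktuple -mulr_algl rmorphM /=; congr (_ * _).
by rewrite linearZ /= rmorph1.
Qed.

Lemma coef_rho (k : 'I_n) : (mesym n L k.+1).@[fun a => - rho a] = in_alg L (f`_(n - k.+1)).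
Proof.
rewrite mesym_neg.
have e : (\prod_(c <- [tuple rho a | a < n]) ('X - c%:P))`_(n - k.+1)
    = (-1) ^+ k.+1 * (mesym n L k.+1).@[tnth [tuple rho a | a < n]].
  exact: (mroots_coeff [tuple rho a | a < n] (lift ord0 k)).
have p1 : \prod_(c <- [tuple rho a | a < n]) ('X - c%:P) = map_poly (in_alg L) f.
  rewrite frs (perm_big _ perm_rs) big_tuple big_map.
  have -> : iota 0 n = index_iota 0 n by rewrite /index_iota subn0.
  rewrite big_mkord.
  by apply: eq_bigr => a _; rewrite tnth_mktuple.
rewrite p1 coef_map /= in e.
have e2 : in_alg L (f`_(n - k.+1)) = (-1) ^+ k.+1 * (mesym n L k.+1).@[tnth [tuple rho a | a < n]].
  exact: e.
rewrite e2; congr (_ * _); apply: meval_eq => a; by rewrite tnth_mktuple.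
Qed.

End GaloisSec.
Theorem theorem3p3 (F : fieldType) (L : splittingFieldType F)
    (n : nat) (f : {poly F}) (K : {subfield L}) :
  (0 < n)%N ->
  f \is monic -> size f = n.+1 ->
  separable_poly f -> irreducible_poly f ->
  splittingFieldFor 1%AS (map_poly (in_alg L) f) K ->
  cyclic 'Gal(K / 1%AS) ->
  (map_mpoly intr (h n)).@[fun i : 'I_n => f`_(n - i.+1)] != 0 ->
  exists2 rs : seq L,
    map_poly (in_alg L) f = \prod_(r <- rs) ('X - r%:P) & basis_of K rs.
Proof.
move=> n0 fmon fsz fsep firr [rs0 frs0 Krs0] cycG hne.
have frs : map_poly (in_alg L) f = \prod_(r <- rs0) ('X - r%:P).
  by apply/eqP; rewrite -eqp_monic ?map_monic ?monic_prod_XsubC.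
case/cyclicP: cycG => g gen.
exists rs0 => //.
have nz : forall m, m \in divisors n ->
    mmap intr (fun a => - rho rs0 g a) (theta n m \mPo [tuple mesym n int i.+1 | i < n]) != 0.
  move=> m md.
  have hm : mmap intr (fun i : 'I_n => f`_(n - i.+1)) (theta n m) != 0.
    move: hne; rewrite mmap_map /h rmorph_prod /= prodf_seq_neq0 => /allP /(_ m md).
    by [].
  rewrite mmap_comp.
  rewrite (eq_mmap _ (h2 := fun i : 'I_n => in_alg L (f`_(n - i.+1)))); last first.
    move=> i; rewrite tnth_mktuple mmap_mesym.
    exact: (coef_rho n0 fmon fsz fsep firr frs Krs0 gen).
  rewrite -(@eq_mmap2 _ _ _ (in_alg L \o intr) _ (in_alg L \o (fun i : 'I_n => f`_(n - i.+1)))) //; last first.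
    by move=> c /=; rewrite scaler_int.
  by rewrite -rmorph_mmap fmorph_eq0.
rewrite basisEfree; apply/and3P; split.
- rewrite (perm_free (perm_rs n0 fmon fsz fsep firr frs Krs0 gen)).
  have -> : [seq rho rs0 g j | j <- iota 0 n] = [tuple rho rs0 g a | a < n] :> seq L.
    by rewrite /= -val_enum_ord -map_comp.
  apply: (free_rho fmon fsz fsep firr frs Krs0 gen).
  by apply: core => m md; exact: nz.
- by apply/span_subvP => r rr; exact: rsK Krs0 r rr.
- by rewrite (dimK n0 fmon fsz fsep firr frs Krs0 gen) (rs_size fsz frs).
Qed.
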